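(* Let $E_3=(S^*,V_1^*,I_1^*,I_2^* )$ be an endemic equilibrium of the model with all components positive. Suppose that for every $(S,V_1,I_1,I_2)$ with positive components other than $E_3$, $$F_1(S^*,I_1^* )\left(2-\tfrac{S^*}{S}-\tfrac{S\,g_1(S,I_1)}{S^*g_1(S^*,I_1^* )}\right)+F_2(S^*,I_2^* )\left(2-\tfrac{S^*}{S}-\tfrac{S\,g_2(S,I_2)}{S^*g_2(S^*,I_2^* )}\right)+rS^*\left(3-\tfrac{S^*}{S}-\tfrac{V_1}{V_1^*}-\tfrac{SV_1^*}{S^*V_1}\right)+\mu S^*\left(2-\tfrac{S^*}{S}-\tfrac{S}{S^*}\right)+I_1\left(S^*g_1(S,I_1)-\alpha_1\right)+I_2\left(S^*g_2(S,I_2)+kV_1^*-\alpha_2\right)<0.$$ Then $E_3$ is globally asymptotically stable.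
   Context: The model is $\dot S=\Lambda-F_1(S,I_1)-F_2(S,I_2)-\lambda S$, $\dot V_1=rS-(\mu+kI_2)V_1$, $\dot I_1=F_1(S,I_1)-\alpha_1I_1$, $\dot I_2=F_2(S,I_2)+kI_2V_1-\alpha_2I_2$ on $\mathbb{R}^4_+$. The constants $\Lambda,\mu,r,k,\gamma_1,\gamma_2>0$ and $v_1,v_2\ge0$; $\lambda=r+\mu$ and $\alpha_i=\gamma_i+v_i+\mu$. For $i=1,2$ the incidence functions satisfy: - (H1) $F_i(S,I_i)=I_if_i(S,I_i)$ with $F_i,f_i\in C^2(\mathbb{R}^2_+,\mathbb{R}_+)$ and $F_i(0,I_i)=F_i(S,0)=0$; - (H2) $\partial f_i/\partial S>0$ and $\partial f_i/\partial I_i\le0$; - (H3) $\lim_{I_i\to0^+}F_i(S,I_i)/I_i$ exists and is positive for $S>0$; - (H4) $f_i(S,I_i)=Sg_i(S,I_i)$ for some function $g_i$. *)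

(* Defs.v *)
From Stdlib Require Import Reals.
From Coquelicot Require Import Coquelicot.
Open Scope R_scope.

Definition partial1 (F : R -> R -> R) (x y : R) : R := Derive (fun s => F s y) x.
Definition partial2 (F : R -> R -> R) (x y : R) : R := Derive (fun i => F x i) y.

Definition cont2 (F : R -> R -> R) (x y : R) : Prop :=
  continuous (fun p : R * R => F (fst p) (snd p)) (x, y).

Definition C1_at (F : R -> R -> R) (x y : R) : Prop :=
  cont2 F x y /\ ex_derive (fun s => F s y) x /\ ex_derive (fun i => F x i) y /\
  cont2 (partial1 F) x y /\ cont2 (partial2 F) x y.

Definition C2_on (U : R * R -> Prop) (F : R -> R -> R) : Prop :=
  forall x y, U (x, y) -> C1_at F x y /\ C1_at (partial1 F) x y /\ C1_at (partial2 F) x y.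

(** F is C^2 on the closed quadrant R^2_+ (i.e. on an open neighbourhood of it). *)
Definition C2_quadrant (F : R -> R -> R) : Prop :=
  exists U : R * R -> Prop, open U /\ (forall x y, 0 <= x -> 0 <= y -> U (x, y)) /\ C2_on U F.

Definition incidence_hyp (F f g : R -> R -> R) : Prop :=
  C2_quadrant F /\ C2_quadrant f /\
  (forall S I, 0 <= S -> 0 <= I -> 0 <= F S I /\ 0 <= f S I) /\
  (forall S I, 0 <= S -> 0 <= I -> F S I = I * f S I) /\
  (forall I, 0 <= I -> F 0 I = 0) /\
  (forall S, 0 <= S -> F S 0 = 0) /\
  (forall S I, 0 <= S -> 0 <= I -> 0 < partial1 f S I /\ partial2 f S I <= 0) /\
  (forall S, 0 < S -> exists L, 0 < L /\ filterlim (fun I => F S I / I) (at_right 0) (locally L)) /\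
  (forall S I, 0 <= S -> 0 <= I -> f S I = S * g S I).

Definition is_solution (Lam mu r k gam1 gam2 v1 v2 : R) (F1 F2 : R -> R -> R)
  (S V1 I1 I2 : R -> R) : Prop :=
  (forall t, 0 < t ->
     is_derive S t (Lam - F1 (S t) (I1 t) - F2 (S t) (I2 t) - (r + mu) * S t) /\
     is_derive V1 t (r * S t - (mu + k * I2 t) * V1 t) /\
     is_derive I1 t (F1 (S t) (I1 t) - (gam1 + v1 + mu) * I1 t) /\
     is_derive I2 t (F2 (S t) (I2 t) + k * I2 t * V1 t - (gam2 + v2 + mu) * I2 t)) /\
  filterlim S (at_right 0) (locally (S 0)) /\
  filterlim V1 (at_right 0) (locally (V1 0)) /\
  filterlim I1 (at_right 0) (locally (I1 0)) /\
  filterlim I2 (at_right 0) (locally (I2 0)).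

Definition is_equilibrium (Lam mu r k gam1 gam2 v1 v2 : R) (F1 F2 : R -> R -> R)
  (S V1 I1 I2 : R) : Prop :=
  Lam - F1 S I1 - F2 S I2 - (r + mu) * S = 0 /\
  r * S - (mu + k * I2) * V1 = 0 /\
  F1 S I1 - (gam1 + v1 + mu) * I1 = 0 /\
  F2 S I2 + k * I2 * V1 - (gam2 + v2 + mu) * I2 = 0.

Definition dist4 (a1 a2 a3 a4 b1 b2 b3 b4 : R) : R :=
  sqrt ((a1 - b1)^2 + (a2 - b2)^2 + (a3 - b3)^2 + (a4 - b4)^2).

Definition GAS (Lam mu r k gam1 gam2 v1 v2 : R) (F1 F2 : R -> R -> R)
  (Ss Vs I1s I2s : R) : Prop :=
  (forall eps, 0 < eps -> exists delta, 0 < delta /\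
     forall S V1 I1 I2 : R -> R,
       is_solution Lam mu r k gam1 gam2 v1 v2 F1 F2 S V1 I1 I2 ->
       0 < S 0 -> 0 < V1 0 -> 0 < I1 0 -> 0 < I2 0 ->
       dist4 (S 0) (V1 0) (I1 0) (I2 0) Ss Vs I1s I2s < delta ->
       forall t, 0 <= t -> dist4 (S t) (V1 t) (I1 t) (I2 t) Ss Vs I1s I2s < eps) /\
  (forall S V1 I1 I2 : R -> R,
     is_solution Lam mu r k gam1 gam2 v1 v2 F1 F2 S V1 I1 I2 ->
     0 < S 0 -> 0 < V1 0 -> 0 < I1 0 -> 0 < I2 0 ->
     filterlim S (Rbar_locally p_infty) (locally Ss) /\
     filterlim V1 (Rbar_locally p_infty) (locally Vs) /\
     filterlim I1 (Rbar_locally p_infty) (locally I1s) /\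
     filterlim I2 (Rbar_locally p_infty) (locally I2s)).

(* Main.v *)
Require Import Defs.
From Stdlib Require Import Reals Lra Lia Classical ClassicalEpsilon.
From Coquelicot Require Import Coquelicot.
Open Scope R_scope.

Definition hh (u us : R) : R := u - us - us * ln (u / us).

Lemma ln_le_sub1 y : 0 < y -> ln y <= y - 1.
Proof. intros Hy. pose proof (exp_ineq1_le (ln y)). rewrite exp_ln in H; lra. Qed.

Lemma hh_lower u us : 0 < u -> 0 < us -> (sqrt u - sqrt us)^2 <= hh u us.
Proof.
  intros Hu Hus. unfold hh.
  assert (Hsu := sqrt_lt_R0 u Hu). assert (Hsus := sqrt_lt_R0 us Hus).
  assert (E: u / us = (sqrt u / sqrt us)^2).
  { unfold Rdiv. rewrite Rpow_mult_distr. rewrite pow2_sqrt by lra.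
    rewrite pow_inv. rewrite pow2_sqrt by lra. reflexivity. }
  rewrite E, ln_pow by (apply Rdiv_lt_0_compat; lra).
  pose proof (ln_le_sub1 (sqrt u / sqrt us) ltac:(apply Rdiv_lt_0_compat; lra)).
  replace (INR 2) with 2 by (simpl; lra).
  assert (us * ln (sqrt u / sqrt us) <= us * (sqrt u / sqrt us - 1)) by (apply Rmult_le_compat_l; lra).
  replace (us * (sqrt u / sqrt us - 1)) with (sqrt us * sqrt u - us) in H0.
  2:{ assert (Hq: sqrt us * sqrt us = us) by (apply sqrt_sqrt; lra).
        assert (Hd: sqrt u / sqrt us * sqrt us = sqrt u) by (field; lra).
        rewrite <- Hq at 1. rewrite Rmult_minus_distr_l, Rmult_1_r.
        rewrite Hq. f_equal. transitivity (sqrt us * sqrt us * (sqrt u / sqrt us)); [field; lra | rewrite Hq; reflexivity]. }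
  assert (sqrt u * sqrt u = u) by (apply sqrt_sqrt; lra).
  assert (sqrt us * sqrt us = us) by (apply sqrt_sqrt; lra).
  nra.
Qed.

Lemma hh_nonneg u us : 0 < u -> 0 < us -> 0 <= hh u us.
Proof. intros. pose proof (hh_lower u us H H0). pose proof (pow2_ge_0 (sqrt u - sqrt us)). lra. Qed.

Lemma hh_upper u us : 0 < u -> 0 < us -> hh u us <= (u - us)^2 / u.
Proof.
  intros Hu Hus. unfold hh.
  pose proof (ln_le_sub1 (us / u) ltac:(apply Rdiv_lt_0_compat; lra)).
  rewrite <- (Rinv_div u us), ln_Rinv in H by (apply Rdiv_lt_0_compat; lra). rewrite Rinv_div in H.
  assert (us * (1 - us/u) <= us * ln (u/us)).
  { apply Rmult_le_compat_l; lra. }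
  replace ((u - us)^2/u) with (u - us - us * (1 - us/u)) by (field; lra).
  lra.
Qed.

Lemma hh_lowbound u us M : 0 < u -> 0 < us -> hh u us <= M ->
  us * exp (- ((M + us) / us)) <= u.
Proof.
  intros Hu Hus H. unfold hh in H.
  assert (ln (u/us) >= - ((M + us)/us)).
  { assert (us * ln (u/us) >= - (M + us)) by lra.
    apply Rle_ge. apply (Rmult_le_reg_l us); [lra|].
    replace (us * - ((M + us)/us)) with (-(M+us)) by (field; lra). lra. }
  assert (exp (- ((M + us)/us)) <= u / us).
  { rewrite <- (exp_ln (u/us)) by (apply Rdiv_lt_0_compat; lra).
    destruct (Rle_lt_or_eq_dec _ _ (Rge_le _ _ H0)) as [Hl|He].
    - left. apply exp_increasing; lra.
    - rewrite He; lra. }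
  apply (Rmult_le_compat_l us) in H1; [|lra].
  replace (us * (u/us)) with u in H1 by (field; lra). lra.
Qed.
Lemma Df_alg (Lam mu r k gam1 gam2 v1 v2 Ss Vs I1s I2s S V I1 I2 A B a b a0 b0 F1s F2s : R) :
  0 < Ss -> 0 < Vs -> 0 < I1s -> 0 < I2s -> 0 < S -> 0 < V -> 0 < I1 -> 0 < I2 ->
  a0 <> 0 -> b0 <> 0 ->
  A = I1 * (S * a) -> B = I2 * (S * b) -> F1s = I1s * (Ss * a0) -> F2s = I2s * (Ss * b0) ->
  Lam - F1s - F2s - (r + mu) * Ss = 0 ->
  r * Ss - (mu + k * I2s) * Vs = 0 ->
  F1s - (gam1 + v1 + mu) * I1s = 0 ->
  F2s + k * I2s * Vs - (gam2 + v2 + mu) * I2s = 0 ->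
  (1 - Ss/S)*(Lam - A - B - (r+mu)*S) + (1 - Vs/V)*(r*S - (mu+k*I2)*V)
  + (1 - I1s/I1)*(A - (gam1+v1+mu)*I1) + (1 - I2s/I2)*(B + k*I2*V - (gam2+v2+mu)*I2)
  = F1s * (2 - Ss / S - S * a / (Ss * a0))
     + F2s * (2 - Ss / S - S * b / (Ss * b0))
     + r * Ss * (3 - Ss / S - V / Vs - S * Vs / (Ss * V))
     + mu * Ss * (2 - Ss / S - S / Ss)
     + I1 * (Ss * a - (gam1 + v1 + mu))
     + I2 * (Ss * b + k * Vs - (gam2 + v2 + mu)).
Proof.
  intros. subst A B F1s F2s.
  assert (Lam = I1s * (Ss * a0) + I2s * (Ss * b0) + (r + mu) * Ss) by lra.
  assert (gam1 = Ss * a0 - v1 - mu).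
  { apply (Rmult_eq_reg_r I1s); [|lra]. nra. }
  assert (gam2 = Ss * b0 + k * Vs - v2 - mu).
  { apply (Rmult_eq_reg_r I2s); [|lra]. nra. }
  assert (r = (mu + k * I2s) * Vs / Ss) by (field_simplify; [|lra]; apply (Rmult_eq_reg_r Ss); [|lra]; field_simplify; lra).
  subst Lam gam1 gam2 r. field. repeat split; lra.
Qed.

Lemma ball_R (x e y : R) : ball x e y <-> Rabs (y - x) < e.
Proof. unfold ball; simpl; unfold AbsRing_ball, abs, minus, plus, opp; simpl. tauto. Qed.

Lemma cont_ed f x : continuous f x -> forall e, 0 < e -> exists d, 0 < d /\
  forall y, Rabs (y - x) < d -> Rabs (f y - f x) < e.
Proof.
  intros H e He. pose proof (proj1 (filterlim_locally f (f x)) H (mkposreal e He)) as H1.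
  destruct H1 as [d Hd]. exists d. split. apply cond_pos.
  intros y Hy. apply ball_R. apply Hd. apply ball_R. exact Hy.
Qed.

Lemma rcont_ed f : filterlim f (at_right 0) (locally (f 0)) -> forall e, 0 < e -> exists d, 0 < d /\
  forall y, 0 < y < d -> Rabs (f y - f 0) < e.
Proof.
  intros H e He. pose proof (proj1 (filterlim_locally f (f 0)) H (mkposreal e He)) as H1.
  destruct H1 as [d Hd]. exists d. split. apply cond_pos.
  intros y Hy. apply ball_R. apply Hd. apply ball_R. rewrite Rminus_0_r, Rabs_pos_eq; lra. lra.
Qed.

Lemma pos_near0 f : filterlim f (at_right 0) (locally (f 0)) -> 0 < f 0 ->
  exists d, 0 < d /\ forall t, 0 <= t < d -> 0 < f t.
Proof.
  intros H H0. destruct (rcont_ed f H (f 0) H0) as [d [Hd Hf]].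
  exists d; split; auto. intros t Ht. destruct (Req_dec t 0) as [->|Hne]; auto.
  specialize (Hf t ltac:(lra)). apply Rabs_def2 in Hf. lra.
Qed.

Lemma ge_at f T m : continuous f T -> 0 < T -> (forall t, 0 <= t < T -> m <= f t) -> m <= f T.
Proof.
  intros Hc HT H. destruct (Rle_or_lt m (f T)) as [|Hlt]; auto.
  destruct (cont_ed f T Hc (m - f T) ltac:(lra)) as [d [Hd Hf]].
  set (y := T - Rmin d T / 2).
  assert (0 < Rmin d T) by (apply Rmin_glb_lt; lra).
  assert (Rmin d T <= d) by apply Rmin_l. assert (Rmin d T <= T) by apply Rmin_r.
  specialize (Hf y). specialize (H y). unfold y in *.
  assert (Hab : Rabs (T - Rmin d T / 2 - T) < d) by (rewrite Rabs_left; lra).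
  specialize (Hf Hab). apply Rabs_def2 in Hf. specialize (H ltac:(lra)). lra.
Qed.

Lemma pos_nearT f T m : continuous f T -> 0 < m -> m <= f T ->
  exists d, 0 < d /\ forall t, Rabs (t - T) < d -> 0 < f t.
Proof.
  intros Hc Hm H. destruct (cont_ed f T Hc (m/2) ltac:(lra)) as [d [Hd Hf]].
  exists d; split; auto. intros t Ht. specialize (Hf t Ht). apply Rabs_def2 in Hf. lra.
Qed.

Lemma min4_le a b c d : Rmin (Rmin a b) (Rmin c d) <= a /\ Rmin (Rmin a b) (Rmin c d) <= b /\
  Rmin (Rmin a b) (Rmin c d) <= c /\ Rmin (Rmin a b) (Rmin c d) <= d.
Proof. unfold Rmin; repeat destruct Rle_dec; lra. Qed.

Lemma barrier4 (x1 x2 x3 x4 : R -> R) (m : R) :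
  0 < m ->
  (forall t, 0 < t -> continuous x1 t /\ continuous x2 t /\ continuous x3 t /\ continuous x4 t) ->
  filterlim x1 (at_right 0) (locally (x1 0)) ->
  filterlim x2 (at_right 0) (locally (x2 0)) ->
  filterlim x3 (at_right 0) (locally (x3 0)) ->
  filterlim x4 (at_right 0) (locally (x4 0)) ->
  0 < x1 0 -> 0 < x2 0 -> 0 < x3 0 -> 0 < x4 0 ->
  (forall T, (forall t, 0 <= t < T -> 0 < x1 t /\ 0 < x2 t /\ 0 < x3 t /\ 0 < x4 t) ->
     forall t, 0 <= t < T -> m <= x1 t /\ m <= x2 t /\ m <= x3 t /\ m <= x4 t) ->
  forall t, 0 <= t -> m <= x1 t /\ m <= x2 t /\ m <= x3 t /\ m <= x4 t.
Proof.
  intros Hm Hc R1 R2 R3 R4 P1 P2 P3 P4 HB.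
  set (P := fun t => 0 < x1 t /\ 0 < x2 t /\ 0 < x3 t /\ 0 < x4 t).
  set (A := fun T => 0 <= T /\ forall t, 0 <= t < T -> P t).
  destruct (pos_near0 _ R1 P1) as [d1 [Hd1 D1]].
  destruct (pos_near0 _ R2 P2) as [d2 [Hd2 D2]].
  destruct (pos_near0 _ R3 P3) as [d3 [Hd3 D3]].
  destruct (pos_near0 _ R4 P4) as [d4 [Hd4 D4]].
  set (d := Rmin (Rmin d1 d2) (Rmin d3 d4)).
  assert (Hdl : d <= d1 /\ d <= d2 /\ d <= d3 /\ d <= d4).
  { apply min4_le. }
  assert (Hd : 0 < d) by (unfold d; repeat apply Rmin_glb_lt; lra).
  assert (Ad : A d).
  { split; [lra|]. intros t Ht. repeat split; [apply D1|apply D2|apply D3|apply D4]; lra. }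
  destruct (classic (exists B, forall T, A T -> T <= B)) as [[B HBd]|Hunb].
  - exfalso.
    destruct (completeness A) as [T0 [Hub Hlub]].
    { exists B. intros T HT. apply HBd; auto. }
    { exists d; auto. }
    assert (HT0d : d <= T0) by (apply Hub; auto).
    assert (HP : forall t, 0 <= t < T0 -> P t).
    { intros t Ht. apply NNPP. intros HnP.
      assert (T0 <= t); [|lra].
      apply Hlub. intros T [HT0 HT]. destruct (Rle_or_lt T t) as [|Hlt]; auto.
      exfalso. apply HnP. apply HT. lra. }
    specialize (HB T0 HP).
    destruct (Hc T0 ltac:(lra)) as [C1 [C2 [C3 C4]]].
    assert (G1 : m <= x1 T0) by (apply ge_at; auto; [lra|]; intros; apply HB; auto).
    assert (G2 : m <= x2 T0) by (apply ge_at; auto; [lra|]; intros; apply HB; auto).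
    assert (G3 : m <= x3 T0) by (apply ge_at; auto; [lra|]; intros; apply HB; auto).
    assert (G4 : m <= x4 T0) by (apply ge_at; auto; [lra|]; intros; apply HB; auto).
    destruct (pos_nearT _ _ _ C1 Hm G1) as [e1 [He1 E1]].
    destruct (pos_nearT _ _ _ C2 Hm G2) as [e2 [He2 E2]].
    destruct (pos_nearT _ _ _ C3 Hm G3) as [e3 [He3 E3]].
    destruct (pos_nearT _ _ _ C4 Hm G4) as [e4 [He4 E4]].
    set (e := Rmin (Rmin e1 e2) (Rmin e3 e4)).
    assert (Hel : e <= e1 /\ e <= e2 /\ e <= e3 /\ e <= e4).
    { apply min4_le. }
    assert (He : 0 < e) by (unfold e; repeat apply Rmin_glb_lt; lra).
    assert (A (T0 + e/2)).
    { split; [lra|]. intros t Ht. destruct (Rlt_or_le t T0) as [Hl|Hl].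
      - apply HP; lra.
      - assert (Rabs (t - T0) < e) by (rewrite Rabs_pos_eq; lra).
        repeat split; [apply E1|apply E2|apply E3|apply E4]; lra. }
    assert (T0 + e/2 <= T0) by (apply Hub; auto). lra.
  - intros t Ht. assert (exists T, A T /\ t < T) as [T [[_ HT] HtT]].
    { apply NNPP; intros Hn. apply Hunb. exists t. intros T HT.
      destruct (Rle_or_lt T t); auto. exfalso; apply Hn; eauto. }
    apply (HB T HT). lra.
Qed.

Lemma lim_inv_n : is_lim_seq (fun n => / (INR n + 1)) 0.
Proof.
  assert (H : is_lim_seq (fun n => INR (S n)) p_infty) by (apply (is_lim_seq_incr_1 INR); apply is_lim_seq_INR).
  pose proof (is_lim_seq_inv _ _ H ltac:(discriminate)) as H1. simpl in H1.
  eapply is_lim_seq_ext; [|exact H1]. intros n; destruct n; simpl; [lra|reflexivity].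
Qed.

Lemma bw_sub (u : nat -> R) a b : (forall n, a <= u n <= b) ->
  exists phi : nat -> nat, (forall n, (phi n < phi (S n))%nat) /\
  exists l, a <= l <= b /\ is_lim_seq (fun n => u (phi n)) l.
Proof.
  intros Hab.
  destruct (Bolzano_Weierstrass u (fun c => a <= c <= b) (compact_P3 a b) Hab) as [l Hl].
  assert (Hv : forall N, exists p, (N <= p)%nat /\ Rabs (u p - l) < / (INR N + 1)).
  { intros N. assert (Hpos : 0 < / (INR N + 1)).
    { apply Rinv_0_lt_compat. pose proof (pos_INR N). lra. }
    destruct (Hl (fun y => Rabs (y - l) < / (INR N + 1)) N) as [p [Hp1 Hp2]].
    - exists (mkposreal _ Hpos). intros y Hy. exact Hy.
    - exists p; auto. }
  set (c := fun N => proj1_sig (constructive_indefinite_description _ (Hv N))).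
  assert (Hc : forall N, (N <= c N)%nat /\ Rabs (u (c N) - l) < / (INR N + 1)).
  { intros N. unfold c. destruct (constructive_indefinite_description _ (Hv N)) as [p Hp]. exact Hp. }
  set (phi := fix phi n := match n with O => c O | S n' => c (S (phi n')) end).
  assert (Hinc : forall n, (phi n < phi (S n))%nat).
  { intros n. simpl. destruct (Hc (S (phi n))) as [H1 _]. lia. }
  assert (Hge : forall n, (n <= phi n)%nat).
  { induction n. lia. specialize (Hinc n). lia. }
  assert (Hb : forall n, Rabs (u (phi n) - l) < / (INR n + 1)).
  { intros n. destruct n as [|n].
    - simpl. destruct (Hc O) as [_ H]. exact H.
    - change (Rabs (u (c (S (phi n))) - l) < / (INR (S n) + 1)).
      destruct (Hc (S (phi n))) as [_ H]. eapply Rlt_le_trans; [exact H|].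
      apply Rinv_le_contravar; [pose proof (pos_INR (S n)); lra|].
      apply Rplus_le_compat_r. apply le_INR. specialize (Hge n). lia. }
  exists phi. split; auto.
  assert (Hlim : is_lim_seq (fun n => u (phi n)) l).
  { apply is_lim_seq_le_le with (u := fun n => l - / (INR n + 1)) (w := fun n => l + / (INR n + 1)).
    - intros n. specialize (Hb n). apply Rabs_def2 in Hb. lra.
    - replace (Finite l) with (Rbar_minus l 0) by (simpl; f_equal; ring).
      apply is_lim_seq_minus'. apply is_lim_seq_const. apply lim_inv_n. 
    - replace (Finite l) with (Rbar_plus l 0) by (simpl; f_equal; ring).
      apply is_lim_seq_plus'. apply is_lim_seq_const. apply lim_inv_n. }
  exists l. split; auto. split.
  - apply (is_lim_seq_le (fun _ => a) (fun n => u (phi n)) a l); auto.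
    intros n; apply Hab. apply is_lim_seq_const.
  - apply (is_lim_seq_le (fun n => u (phi n)) (fun _ => b) l b); auto.
    intros n; apply Hab. apply is_lim_seq_const.
Qed.

Lemma lim_pair (a c : nat -> R) (x y : R) : is_lim_seq a x -> is_lim_seq c y ->
  filterlim (fun n => (a n, c n)) eventually (locally (x, y)).
Proof.
  intros Ha Hc. apply filterlim_locally. intros eps.
  pose proof (proj1 (filterlim_locally a x) Ha eps) as H1.
  pose proof (proj1 (filterlim_locally c y) Hc eps) as H2.
  generalize (filter_and _ _ H1 H2). apply filter_imp. intros n [h1 h2].
  split; assumption.
Qed.

Lemma lim_F2 (F : R -> R -> R) (a c : nat -> R) (x y : R) : cont2 F x y ->
  is_lim_seq a x -> is_lim_seq c y -> is_lim_seq (fun n => F (a n) (c n)) (F x y).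
Proof.
  intros HF Ha Hc. unfold cont2, continuous in HF.
  apply (filterlim_comp _ _ _ (fun n => (a n, c n)) (fun p => F (fst p) (snd p)) eventually (locally (x,y)) (locally (F x y))).
  - apply lim_pair; auto.
  - exact HF.
Qed.

Lemma lim_ln (a : nat -> R) (x : R) : 0 < x -> is_lim_seq a x -> is_lim_seq (fun n => ln (a n)) (ln x).
Proof.
  intros Hx Ha. apply is_lim_seq_continuous; auto.
  apply continuity_pt_filterlim. apply continuous_ln. auto.
Qed.

Lemma der_plus (f g : R -> R) x df dg : is_derive f x df -> is_derive g x dg ->
  is_derive (fun y => f y + g y) x (df + dg).
Proof. intros; apply (is_derive_plus f g); auto. Qed.

Lemma der_minus (f g : R -> R) x df dg : is_derive f x df -> is_derive g x dg ->
  is_derive (fun y => f y - g y) x (df - dg).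
Proof. intros; apply (is_derive_minus f g); auto. Qed.

Lemma der_hh (x : R -> R) t dx xs : is_derive x t dx -> 0 < x t -> 0 < xs ->
  is_derive (fun y => hh (x y) xs) t ((1 - xs / x t) * dx).
Proof.
  intros Hd Hx Hxs. unfold hh.
  assert (Hq : is_derive (fun y => x y / xs) t (dx / xs)).
  { unfold Rdiv. eapply is_derive_ext. intros y. rewrite Rmult_comm. reflexivity.
    rewrite Rmult_comm. apply is_derive_scal. exact Hd. }
  assert (Hl : is_derive (fun y => ln (x y / xs)) t (scal (dx / xs) (/ (x t / xs)))).
  { apply (is_derive_comp ln (fun y => x y / xs)); auto.
    apply is_derive_ln. apply Rdiv_lt_0_compat; lra. }
  assert (Hc : is_derive (fun _ : R => xs) t 0) by apply (is_derive_const xs t).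
  pose proof (der_minus _ _ _ _ _ (der_minus _ _ _ _ _ Hd Hc) (is_derive_scal _ _ xs _ Hl)) as H.
  replace ((1 - xs / x t) * dx) with (dx - 0 - xs * scal (dx / xs) (/ (x t / xs))); [exact H|].
  unfold scal; simpl; unfold mult; simpl. field. lra.
Qed.

Definition etaf (us e : R) : R := (Rmin 1 (e / (2 * sqrt us + 2)))^2.

Lemma etaf_pos us e : 0 < e -> 0 <= us -> 0 < etaf us e.
Proof.
  intros He Hus. unfold etaf. apply pow_lt. apply Rmin_glb_lt; [lra|].
  apply Rdiv_lt_0_compat; auto. pose proof (sqrt_pos us). lra.
Qed.

Lemma hh_close u us e : 0 < u -> 0 < us -> 0 < e -> hh u us < etaf us e -> Rabs (u - us) < e.
Proof.
  intros Hu Hus He H. pose proof (hh_lower u us Hu Hus) as Hl. unfold etaf in H.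
  set (s := Rmin 1 (e / (2 * sqrt us + 2))) in *.
  assert (Hsq := sqrt_pos us).
  assert (Hs1 : s <= 1) by apply Rmin_l.
  assert (Hs2 : s <= e / (2 * sqrt us + 2)) by apply Rmin_r.
  assert (Hs0 : 0 < s) by (apply Rmin_glb_lt; [lra| apply Rdiv_lt_0_compat; lra]).
  assert (Hd : Rabs (sqrt u - sqrt us) < s).
  { assert (Ha : (sqrt u - sqrt us)^2 < s^2) by lra.
    apply Rabs_def1.
    - destruct (Rlt_or_le (sqrt u - sqrt us) s); auto. exfalso. nra.
    - destruct (Rlt_or_le (- s) (sqrt u - sqrt us)); auto. exfalso. nra. }
  assert (Hsu : sqrt u * sqrt u = u) by (apply sqrt_sqrt; lra).
  assert (Hsus : sqrt us * sqrt us = us) by (apply sqrt_sqrt; lra).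
  assert (Eq : u - us = (sqrt u - sqrt us) * (sqrt u + sqrt us)) by nra.
  rewrite Eq, Rabs_mult. apply Rabs_def2 in Hd.
  assert (Hp : 0 <= sqrt u) by apply sqrt_pos.
  rewrite (Rabs_pos_eq (sqrt u + sqrt us)) by lra.
  assert (Hb : sqrt u + sqrt us <= 2 * sqrt us + 1) by lra.
  assert (e / (2 * sqrt us + 2) * (2 * sqrt us + 2) = e) by (field; lra).
  assert (Rabs (sqrt u - sqrt us) < s) by (apply Rabs_def1; lra).
  assert (Rabs (sqrt u - sqrt us) * (sqrt u + sqrt us) <= s * (2 * sqrt us + 1)).
  { apply Rmult_le_compat; try lra. apply Rabs_pos. }
  nra.
Qed.

Lemma dist4_lt a1 a2 a3 a4 b1 b2 b3 b4 e : 0 < e ->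
  Rabs (a1 - b1) < e / 2 -> Rabs (a2 - b2) < e / 2 -> Rabs (a3 - b3) < e / 2 -> Rabs (a4 - b4) < e / 2 ->
  dist4 a1 a2 a3 a4 b1 b2 b3 b4 < e.
Proof.
  intros He H1 H2 H3 H4. unfold dist4.
  rewrite <- (sqrt_pow2 e) by lra. apply sqrt_lt_1_alt. split.
  - repeat apply Rplus_le_le_0_compat; apply pow2_ge_0.
  - assert (forall x, Rabs x < e / 2 -> x ^ 2 < e^2 / 4).
    { intros x Hx. rewrite <- (pow2_abs x). pose proof (Rabs_pos x). nra. }
    pose proof (H _ H1); pose proof (H _ H2); pose proof (H _ H3); pose proof (H _ H4). lra.
Qed.

Lemma dist4_ge a1 a2 a3 a4 b1 b2 b3 b4 :
  Rabs (a1 - b1) <= dist4 a1 a2 a3 a4 b1 b2 b3 b4 /\ Rabs (a2 - b2) <= dist4 a1 a2 a3 a4 b1 b2 b3 b4 /\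
  Rabs (a3 - b3) <= dist4 a1 a2 a3 a4 b1 b2 b3 b4 /\ Rabs (a4 - b4) <= dist4 a1 a2 a3 a4 b1 b2 b3 b4.
Proof.
  unfold dist4.
  pose proof (pow2_ge_0 (a1 - b1)); pose proof (pow2_ge_0 (a2 - b2));
  pose proof (pow2_ge_0 (a3 - b3)); pose proof (pow2_ge_0 (a4 - b4)).
  repeat split; [rewrite <- (sqrt_pow2 (Rabs (a1 - b1))) by apply Rabs_pos
                |rewrite <- (sqrt_pow2 (Rabs (a2 - b2))) by apply Rabs_pos
                |rewrite <- (sqrt_pow2 (Rabs (a3 - b3))) by apply Rabs_pos
                |rewrite <- (sqrt_pow2 (Rabs (a4 - b4))) by apply Rabs_pos];
  apply sqrt_le_1_alt; rewrite pow2_abs; lra.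
Qed.

Definition deltaf (us eta : R) : R := Rmin (us / 2) (Rmin 1 (eta * us / 16)).

Lemma hh_small u us eta : 0 < u -> 0 < us -> 0 < eta -> Rabs (u - us) < deltaf us eta -> hh u us < eta / 4.
Proof.
  intros Hu Hus He H. unfold deltaf in H.
  assert (H1 := Rmin_l (us/2) (Rmin 1 (eta * us / 16))).
  assert (H2 := Rmin_r (us/2) (Rmin 1 (eta * us / 16))).
  assert (H3 := Rmin_l 1 (eta * us / 16)). assert (H4 := Rmin_r 1 (eta * us / 16)).
  set (d := Rmin (us / 2) (Rmin 1 (eta * us / 16))) in *.
  apply Rabs_def2 in H.
  assert (Hu2 : us / 2 < u) by lra.
  pose proof (hh_upper u us Hu Hus) as Hup.
  assert ((u - us)^2 <= eta * us / 16).
  { assert (Rabs (u - us) < d) by (apply Rabs_def1; lra).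
    rewrite <- pow2_abs. pose proof (Rabs_pos (u - us)).
    assert (Rabs (u - us) <= 1) by lra.
    assert (Rabs (u - us) * Rabs (u - us) <= Rabs (u - us) * 1) by (apply Rmult_le_compat_l; auto).
    simpl. lra. }
  assert (Hq : (u - us)^2 / u <= (eta * us / 16) / (us / 2)).
  { unfold Rdiv. apply Rmult_le_compat; try lra. apply pow2_ge_0.
    left; apply Rinv_0_lt_compat; lra.
    apply Rinv_le_contravar; lra. }
  replace ((eta * us / 16) / (us / 2)) with (eta / 8) in Hq by (field; lra). lra.
Qed.
Lemma Df_alg2 (Lam mu r k gam1 gam2 v1 v2 Ss Vs I1s I2s S V I1 I2 A B a b a0 b0 F1s F2s : R) :
  0 < Ss -> 0 < Vs -> 0 < I1s -> 0 < I2s -> 0 < S -> 0 < V -> 0 < I1 -> 0 < I2 ->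
  a0 <> 0 -> 
  A = I1 * (S * a) -> B = I2 * (S * b) -> F1s = I1s * (Ss * a0) -> F2s = 0 ->
  Lam - F1s - F2s - (r + mu) * Ss = 0 ->
  r * Ss - (mu + k * I2s) * Vs = 0 ->
  F1s - (gam1 + v1 + mu) * I1s = 0 ->
  F2s + k * I2s * Vs - (gam2 + v2 + mu) * I2s = 0 ->
  (1 - Ss/S)*(Lam - A - B - (r+mu)*S) + (1 - Vs/V)*(r*S - (mu+k*I2)*V)
  + (1 - I1s/I1)*(A - (gam1+v1+mu)*I1) + (1 - I2s/I2)*(B + k*I2*V - (gam2+v2+mu)*I2)
  = F1s * (2 - Ss / S - S * a / (Ss * a0))
     + F2s * (2 - Ss / S - S * b / (Ss * b0))
     + r * Ss * (3 - Ss / S - V / Vs - S * Vs / (Ss * V))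
     + mu * Ss * (2 - Ss / S - S / Ss)
     + I1 * (Ss * a - (gam1 + v1 + mu))
     + I2 * (Ss * b + k * Vs - (gam2 + v2 + mu)) - I2s * (S * b).
Proof.
  intros. subst A B F1s F2s.
  assert (Lam = I1s * (Ss * a0) + (r + mu) * Ss) by lra.
  assert (gam1 = Ss * a0 - v1 - mu).
  { apply (Rmult_eq_reg_r I1s); [|lra]. nra. }
  assert (gam2 = k * Vs - v2 - mu).
  { apply (Rmult_eq_reg_r I2s); [|lra]. lra. }
  assert (r = (mu + k * I2s) * Vs / Ss) by (field_simplify; [|lra]; apply (Rmult_eq_reg_r Ss); [|lra]; field_simplify; lra).
  subst Lam gam1 gam2 r. rewrite (Rmult_0_l (2 - Ss / S - S * b / (Ss * b0))). field. repeat split; lra.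
Qed.

Lemma hh_up u us M : 0 < u -> 0 < us -> hh u us <= M -> u <= (sqrt us + sqrt M)^2.
Proof.
  intros Hu Hus H. pose proof (hh_lower u us Hu Hus) as Hl.
  assert (HM : 0 <= M) by (pose proof (pow2_ge_0 (sqrt u - sqrt us)); lra).
  assert (Hsm : sqrt M * sqrt M = M) by (apply sqrt_sqrt; lra).
  assert (Hsu : sqrt u * sqrt u = u) by (apply sqrt_sqrt; lra).
  pose proof (sqrt_pos M). pose proof (sqrt_pos us). pose proof (sqrt_pos u).
  assert (sqrt u <= sqrt us + sqrt M).
  { destruct (Rle_or_lt (sqrt u) (sqrt us + sqrt M)); auto. exfalso.
    assert (sqrt M * sqrt M < (sqrt u - sqrt us) * (sqrt u - sqrt us)) by (apply Rmult_le_0_lt_compat; lra).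
    simpl in Hl. lra. }
  rewrite <- Hsu. simpl. rewrite Rmult_1_r. apply Rmult_le_compat; lra.
Qed.

Lemma incr_mono (phi : nat -> nat) : (forall n, (phi n < phi (S n))%nat) ->
  forall n m, (n < m)%nat -> (phi n < phi m)%nat.
Proof.
  intros H n m Hnm. induction Hnm. apply H. specialize (H m). lia.
Qed.

Lemma incr_comp (phi psi : nat -> nat) : (forall n, (phi n < phi (S n))%nat) ->
  (forall n, (psi n < psi (S n))%nat) -> forall n, (phi (psi n) < phi (psi (S n)))%nat.
Proof. intros H1 H2 n. apply incr_mono; auto. Qed.

Lemma flim_plus {T} (F : (T -> Prop) -> Prop) {FF : Filter F} (f g : T -> R) (a b : R) :
  filterlim f F (locally a) -> filterlim g F (locally b) ->
  filterlim (fun t => f t + g t) F (locally (a + b)).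
Proof.
  intros Hf Hg. eapply filterlim_comp_2; [exact Hf|exact Hg|]. apply (filterlim_plus a b).
Qed.

Lemma hh_cont u us : 0 < u -> 0 < us -> continuous (fun y => hh y us) u.
Proof.
  intros Hu Hus. apply (ex_derive_continuous (K := R_AbsRing) (V := R_NormedModule) (fun y => hh y us) u). eexists.
  apply (der_hh (fun y => y) u 1 us); auto. apply (is_derive_id u).
Qed.

Lemma F_decomp (F f g : R -> R -> R) : incidence_hyp F f g -> forall S I, 0 <= S -> 0 <= I ->
  F S I = I * (S * g S I).
Proof.
  intros [_ [_ [_ [HF [_ [_ [_ [_ Hg]]]]]]]] S I HS HI. rewrite HF, Hg; auto.
Qed.

Lemma F_cont (F f g : R -> R -> R) : incidence_hyp F f g -> forall S I, 0 <= S -> 0 <= I ->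
  cont2 F S I.
Proof.
  intros [[U [_ [HU HC]]] _] S I HS HI. destruct (HC S I (HU S I HS HI)) as [[H _] _]. exact H.
Qed.

Section Main.
Variables (Lam mu r k gam1 gam2 v1 v2 : R) (F1 F2 f1 f2 g1 g2 : R -> R -> R) (Ss Vs I1s I2s : R).
Hypotheses (hLam : 0 < Lam) (hmu : 0 < mu) (hr : 0 < r) (hk : 0 < k) (hg1 : 0 < gam1) (hg2 : 0 < gam2)
  (hv1 : 0 <= v1) (hv2 : 0 <= v2) (HI1 : incidence_hyp F1 f1 g1) (HI2 : incidence_hyp F2 f2 g2)
  (hSs : 0 < Ss) (hVs : 0 < Vs) (hI1s : 0 < I1s) (hI2s : 0 < I2s)
  (Heq : is_equilibrium Lam mu r k gam1 gam2 v1 v2 F1 F2 Ss Vs I1s I2s).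

Definition Hx (S V1 I1 I2 : R) : R :=
     F1 Ss I1s * (2 - Ss / S - S * g1 S I1 / (Ss * g1 Ss I1s))
     + F2 Ss I2s * (2 - Ss / S - S * g2 S I2 / (Ss * g2 Ss I2s))
     + r * Ss * (3 - Ss / S - V1 / Vs - S * Vs / (Ss * V1))
     + mu * Ss * (2 - Ss / S - S / Ss)
     + I1 * (Ss * g1 S I1 - (gam1 + v1 + mu))
     + I2 * (Ss * g2 S I2 + k * Vs - (gam2 + v2 + mu)).

Hypothesis Hneg : forall S V1 I1 I2 : R,
     0 < S -> 0 < V1 -> 0 < I1 -> 0 < I2 ->
     (S, V1, I1, I2) <> (Ss, Vs, I1s, I2s) -> Hx S V1 I1 I2 < 0.

Definition Lf (S V I1 I2 : R) : R := hh S Ss + hh V Vs + hh I1 I1s + hh I2 I2s.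

Definition Df (S V I1 I2 : R) : R :=
  (1 - Ss/S)*(Lam - F1 S I1 - F2 S I2 - (r+mu)*S) + (1 - Vs/V)*(r*S - (mu+k*I2)*V)
  + (1 - I1s/I1)*(F1 S I1 - (gam1+v1+mu)*I1) + (1 - I2s/I2)*(F2 S I2 + k*I2*V - (gam2+v2+mu)*I2).

Definition pos4 (S V I1 I2 : R) : Prop := 0 < S /\ 0 < V /\ 0 < I1 /\ 0 < I2.

Lemma g_nonneg (F f g : R -> R -> R) : incidence_hyp F f g -> forall S I, 0 < S -> 0 <= I -> 0 <= g S I.
Proof.
  intros [_ [_ [Hn [_ [_ [_ [_ [_ Hg]]]]]]]] S I HS HI.
  destruct (Hn S I ltac:(lra) HI) as [_ Hf]. rewrite Hg in Hf by (auto; lra).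
  destruct (Rle_or_lt 0 (g S I)); auto. nra.
Qed.

Lemma Df_leH S V I1 I2 : pos4 S V I1 I2 -> Df S V I1 I2 <= Hx S V I1 I2.
Proof.
  intros [hS [hV [hI1 hI2]]]. destruct Heq as [E1 [E2 [E3 E4]]].
  assert (D1s := F_decomp _ _ _ HI1 Ss I1s ltac:(lra) ltac:(lra)).
  assert (D2s := F_decomp _ _ _ HI2 Ss I2s ltac:(lra) ltac:(lra)).
  assert (D1 := F_decomp _ _ _ HI1 S I1 ltac:(lra) ltac:(lra)).
  assert (D2 := F_decomp _ _ _ HI2 S I2 ltac:(lra) ltac:(lra)).
  assert (a0 : g1 Ss I1s <> 0).
  { intros Hz. rewrite Hz, !Rmult_0_r in D1s.
    assert ((gam1 + v1 + mu) * I1s > 0) by (apply Rmult_gt_0_compat; lra). lra. }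
  unfold Df, Hx.
  destruct (Req_dec (g2 Ss I2s) 0) as [b0|b0].
  - rewrite (Df_alg2 Lam mu r k gam1 gam2 v1 v2 Ss Vs I1s I2s S V I1 I2 (F1 S I1) (F2 S I2)
     (g1 S I1) (g2 S I2) (g1 Ss I1s) (g2 Ss I2s) (F1 Ss I1s) (F2 Ss I2s)); auto.
    2: { rewrite D2s, b0; ring. }
    pose proof (g_nonneg _ _ _ HI2 S I2 hS ltac:(lra)).
    assert (0 <= I2s * (S * g2 S I2)) by (apply Rmult_le_pos; [lra|]; apply Rmult_le_pos; lra). lra.
  - right. apply (Df_alg Lam mu r k gam1 gam2 v1 v2 Ss Vs I1s I2s S V I1 I2 (F1 S I1) (F2 S I2)
     (g1 S I1) (g2 S I2) (g1 Ss I1s) (g2 Ss I2s) (F1 Ss I1s) (F2 Ss I2s)); auto.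
Qed.

Lemma Df_E3 : Df Ss Vs I1s I2s = 0.
Proof.
  unfold Df. replace (Ss/Ss) with 1 by (field; lra). replace (Vs/Vs) with 1 by (field; lra).
  replace (I1s/I1s) with 1 by (field; lra). replace (I2s/I2s) with 1 by (field; lra). ring.
Qed.

Lemma Df_le0 S V I1 I2 : pos4 S V I1 I2 -> Df S V I1 I2 <= 0.
Proof.
  intros Hp. destruct (classic ((S, V, I1, I2) = (Ss, Vs, I1s, I2s))) as [He|Hne].
  - inversion He; subst. rewrite Df_E3; lra.
  - eapply Rle_trans; [apply Df_leH; auto|]. destruct Hp as [? [? [? ?]]]. left; apply Hneg; auto.
Qed.

Lemma hh_self x : 0 < x -> hh x x = 0.
Proof. intros. unfold hh. replace (x/x) with 1 by (field; lra). rewrite ln_1. ring. Qed.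

Lemma Lf_E3 : Lf Ss Vs I1s I2s = 0.
Proof. unfold Lf. rewrite !hh_self by auto. ring. Qed.

Lemma Lf_bounds S V I1 I2 : pos4 S V I1 I2 ->
  hh S Ss <= Lf S V I1 I2 /\ hh V Vs <= Lf S V I1 I2 /\ hh I1 I1s <= Lf S V I1 I2 /\ hh I2 I2s <= Lf S V I1 I2.
Proof.
  intros [? [? [? ?]]]. unfold Lf.
  pose proof (hh_nonneg S Ss); pose proof (hh_nonneg V Vs); pose proof (hh_nonneg I1 I1s); pose proof (hh_nonneg I2 I2s).
  repeat split; lra.
Qed.

Lemma Lf_nonneg S V I1 I2 : pos4 S V I1 I2 -> 0 <= Lf S V I1 I2.
Proof.
  intros [? [? [? ?]]]. unfold Lf.
  pose proof (hh_nonneg S Ss); pose proof (hh_nonneg V Vs); pose proof (hh_nonneg I1 I1s); pose proof (hh_nonneg I2 I2s).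
  lra.
Qed.

Lemma lim_opp (u : nat -> R) (l : R) : is_lim_seq u l -> is_lim_seq (fun n => - u n) (- l).
Proof. intros H. apply (proj1 (is_lim_seq_opp u l) H). Qed.

Lemma lim_inv (u : nat -> R) (l : R) : 0 < l -> is_lim_seq u l -> is_lim_seq (fun n => / u n) (/ l).
Proof. intros Hl H. apply (is_lim_seq_inv u l H). intros He; injection He; lra. Qed.

Ltac lim_step := match goal with
  | |- is_lim_seq (fun n => ?c) _ => apply is_lim_seq_const
  | |- is_lim_seq (fun n => _ + _) _ => apply is_lim_seq_plus'
  | |- is_lim_seq (fun n => _ - _) _ => apply is_lim_seq_minus'
  | |- is_lim_seq (fun n => _ * _) _ => apply is_lim_seq_mult'
  | |- is_lim_seq (fun n => _ / _) _ => apply is_lim_seq_div'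
  | |- is_lim_seq (fun n => - _) _ => apply lim_opp
  | |- is_lim_seq (fun n => / _) _ => apply lim_inv
  | |- is_lim_seq (fun n => ln _) _ => apply lim_ln
  | |- is_lim_seq (fun n => F1 _ _) _ => apply lim_F2
  | |- is_lim_seq (fun n => F2 _ _) _ => apply lim_F2
  | |- is_lim_seq _ _ => eassumption
  end.

Lemma Df_lim (a b c d : nat -> R) (pa pb pc pd : R) : pos4 pa pb pc pd ->
  is_lim_seq a pa -> is_lim_seq b pb -> is_lim_seq c pc -> is_lim_seq d pd ->
  is_lim_seq (fun n => Df (a n) (b n) (c n) (d n)) (Df pa pb pc pd).
Proof.
  intros [? [? [? ?]]] Ha Hb Hc Hd. unfold Df.
  repeat lim_step; try lra.
  all: try (eapply F_cont; eauto; lra).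
Qed.

Lemma Lf_lim (a b c d : nat -> R) (pa pb pc pd : R) : pos4 pa pb pc pd ->
  is_lim_seq a pa -> is_lim_seq b pb -> is_lim_seq c pc -> is_lim_seq d pd ->
  is_lim_seq (fun n => Lf (a n) (b n) (c n) (d n)) (Lf pa pb pc pd).
Proof.
  intros [? [? [? ?]]] Ha Hb Hc Hd. unfold Lf, hh.
  repeat lim_step; try lra.
  all: apply Rdiv_lt_0_compat; lra.
Qed.


Section Sol.
Variables (S V I1 I2 : R -> R).
Hypotheses (Hsol : is_solution Lam mu r k gam1 gam2 v1 v2 F1 F2 S V I1 I2)
  (P1 : 0 < S 0) (P2 : 0 < V 0) (P3 : 0 < I1 0) (P4 : 0 < I2 0).

Definition Lt (t : R) : R := Lf (S t) (V t) (I1 t) (I2 t).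
Definition Dt (t : R) : R := Df (S t) (V t) (I1 t) (I2 t).
Definition post (t : R) : Prop := pos4 (S t) (V t) (I1 t) (I2 t).

Lemma Lt_deriv t : 0 < t -> post t -> is_derive Lt t (Dt t).
Proof.
  intros Ht [p1 [p2 [p3 p4]]]. destruct Hsol as [Hd _]. destruct (Hd t Ht) as [dS [dV [dI1 dI2]]].
  unfold Lt, Lf, Dt, Df.
  apply der_plus; [apply der_plus; [apply der_plus|]|];
  apply der_hh; auto.
Qed.

Lemma cont_t t : 0 < t -> continuous S t /\ continuous V t /\ continuous I1 t /\ continuous I2 t.
Proof.
  intros Ht. destruct Hsol as [Hd _]. destruct (Hd t Ht) as [dS [dV [dI1 dI2]]].
  repeat split; apply (ex_derive_continuous (K := R_AbsRing) (V := R_NormedModule)); eexists; eauto.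
Qed.

Lemma Lt_contpt t : 0 < t -> post t -> continuity_pt Lt t.
Proof.
  intros Ht Hp. apply continuity_pt_filterlim.
  apply (ex_derive_continuous (K := R_AbsRing) (V := R_NormedModule)). eexists. apply Lt_deriv; auto.
Qed.

Lemma Lt_rcont : filterlim Lt (at_right 0) (locally (Lt 0)).
Proof.
  destruct Hsol as [_ [R1 [R2 [R3 R4]]]]. unfold Lt, Lf.
  pose proof (filterlim_comp _ _ _ S (fun u => hh u Ss) (at_right 0) (locally (S 0)) _ R1 (hh_cont _ _ P1 hSs)) as H1.
  pose proof (filterlim_comp _ _ _ V (fun u => hh u Vs) (at_right 0) (locally (V 0)) _ R2 (hh_cont _ _ P2 hVs)) as H2.
  pose proof (filterlim_comp _ _ _ I1 (fun u => hh u I1s) (at_right 0) (locally (I1 0)) _ R3 (hh_cont _ _ P3 hI1s)) as H3.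
  pose proof (filterlim_comp _ _ _ I2 (fun u => hh u I2s) (at_right 0) (locally (I2 0)) _ R4 (hh_cont _ _ P4 hI2s)) as H4.
  exact (flim_plus _ _ _ _ _ (flim_plus _ _ _ _ _ (flim_plus _ _ _ _ _ H1 H2) H3) H4).
Qed.

Lemma Lt_mvt s t : 0 < s <= t -> (forall u, s <= u <= t -> post u) ->
  exists c, s <= c <= t /\ Lt t - Lt s = Dt c * (t - s).
Proof.
  intros Hst Hp. destruct (MVT_gen Lt s t Dt) as [c [Hc He]].
  - intros x Hx. rewrite Rmin_left, Rmax_right in Hx by lra. apply Lt_deriv; [lra|]. apply Hp; lra.
  - intros x Hx. rewrite Rmin_left, Rmax_right in Hx by lra. apply Lt_contpt; [lra|]. apply Hp; lra.
  - rewrite Rmin_left, Rmax_right in Hc by lra. exists c. split; auto.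
Qed.

Lemma Lt_mono s t : 0 < s <= t -> (forall u, s <= u <= t -> post u) -> Lt t <= Lt s.
Proof.
  intros Hst Hp. destruct (Lt_mvt s t Hst Hp) as [c [Hc He]].
  assert (Dt c <= 0) by (apply Df_le0; apply Hp; lra).
  assert (Dt c * (t - s) <= 0).
  { rewrite <- (Rmult_0_l (t - s)). apply Rmult_le_compat_r; lra. }
  lra.
Qed.

Lemma Lt_le0 T t : (forall u, 0 <= u < T -> post u) -> 0 <= t < T -> Lt t <= Lt 0.
Proof.
  intros Hp Ht. destruct (Req_dec t 0) as [->|Hne]; [lra|].
  destruct (Rle_or_lt (Lt t) (Lt 0)) as [|Hlt]; auto. exfalso.
  destruct (rcont_ed Lt Lt_rcont (Lt t - Lt 0) ltac:(lra)) as [d [Hd Hf]].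
  set (y := Rmin d t / 2).
  assert (0 < Rmin d t) by (apply Rmin_glb_lt; lra).
  assert (Rmin d t <= d) by apply Rmin_l. assert (Rmin d t <= t) by apply Rmin_r.
  assert (Hy : 0 < y < d) by (unfold y; lra).
  specialize (Hf y Hy). apply Rabs_def2 in Hf.
  assert (Lt t <= Lt y).
  { apply Lt_mono; [unfold y; lra|]. intros u Hu. apply Hp. unfold y in Hu; lra. }
  lra.
Qed.

Definition ml (xs : R) : R := xs * exp (- ((Lt 0 + xs) / xs)).
Definition mlow : R := Rmin (Rmin (ml Ss) (ml Vs)) (Rmin (ml I1s) (ml I2s)).

Lemma mlow_pos : 0 < mlow.
Proof.
  unfold mlow, ml. pose proof (exp_pos (- ((Lt 0 + Ss) / Ss))). pose proof (exp_pos (- ((Lt 0 + Vs) / Vs))).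
  pose proof (exp_pos (- ((Lt 0 + I1s) / I1s))). pose proof (exp_pos (- ((Lt 0 + I2s) / I2s))).
  repeat apply Rmin_glb_lt; apply Rmult_lt_0_compat; auto.
Qed.

Lemma pos_all t : 0 <= t -> mlow <= S t /\ mlow <= V t /\ mlow <= I1 t /\ mlow <= I2 t.
Proof.
  revert t.
  destruct Hsol as [_ [R1 [R2 [R3 R4]]]].
  apply barrier4; auto.
  - apply mlow_pos.
  - intros; apply cont_t; auto.
  - intros T HT t' Ht'. assert (Hpt : post t') by (apply HT; auto).
    assert (HL : Lt t' <= Lt 0) by (apply (Lt_le0 T); auto; intros; apply HT; auto).
    destruct (Lf_bounds _ _ _ _ Hpt) as [B1 [B2 [B3 B4]]].
    destruct Hpt as [q1 [q2 [q3 q4]]].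
    destruct (min4_le (ml Ss) (ml Vs) (ml I1s) (ml I2s)) as [m1 [m2 [m3 m4]]].
    fold mlow in m1, m2, m3, m4. change (Lt t') with (Lf (S t') (V t') (I1 t') (I2 t')) in HL.
    repeat split.
    + eapply Rle_trans; [exact m1|]. apply hh_lowbound; auto; lra.
    + eapply Rle_trans; [exact m2|]. apply hh_lowbound; auto; lra.
    + eapply Rle_trans; [exact m3|]. apply hh_lowbound; auto; lra.
    + eapply Rle_trans; [exact m4|]. apply hh_lowbound; auto; lra.
Qed.

Lemma post_all t : 0 <= t -> post t.
Proof.
  intros Ht. pose proof mlow_pos. destruct (pos_all t Ht) as [? [? [? ?]]].
  repeat split; lra.
Qed.

Lemma Lt_anti s t : 0 <= s <= t -> Lt t <= Lt s.
Proof.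
  intros Hst. destruct (Req_dec s 0) as [->|Hne].
  - apply (Lt_le0 (t + 1)); [|lra]. intros; apply post_all; lra.
  - apply Lt_mono; [lra|]. intros; apply post_all; lra.
Qed.

Lemma Lt_nonneg t : 0 <= t -> 0 <= Lt t.
Proof. intros; apply Lf_nonneg, post_all; auto. Qed.

Lemma up_all t : 0 <= t ->
  S t <= (sqrt Ss + sqrt (Lt 0))^2 /\ V t <= (sqrt Vs + sqrt (Lt 0))^2 /\
  I1 t <= (sqrt I1s + sqrt (Lt 0))^2 /\ I2 t <= (sqrt I2s + sqrt (Lt 0))^2.
Proof.
  intros Ht. pose proof (post_all t Ht) as Hp.
  destruct (Lf_bounds _ _ _ _ Hp) as [B1 [B2 [B3 B4]]].
  pose proof (Lt_anti 0 t ltac:(lra)) as HL. unfold Lt in HL at 1.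
  destruct Hp as [q1 [q2 [q3 q4]]].
  repeat split; apply hh_up; auto; lra.
Qed.

Lemma Lt_to0 eta : 0 < eta -> exists T, forall t, T <= t -> Lt t < eta.
Proof.
  intros He. apply NNPP; intro Hn.
  assert (Hge : forall t, 0 <= t -> eta <= Lt t).
  { intros t Ht. destruct (Rle_or_lt eta (Lt t)) as [|Hlt]; auto. exfalso; apply Hn.
    exists t. intros t' Ht'. pose proof (Lt_anti t t' ltac:(lra)). lra. }
  set (u := fun n : nat => Lt (INR n + 1)).
  assert (HI : forall n, 0 <= INR n) by apply pos_INR.
  assert (Hu_anti : forall n m, (n <= m)%nat -> u m <= u n).
  { intros n m Hnm. unfold u. apply Lt_anti. pose proof (le_INR _ _ Hnm). pose proof (HI n). lra. }
  assert (Hu_ge : forall n, eta <= u n) by (intros n; unfold u; apply Hge; pose proof (HI n); lra).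
  destruct (completeness (fun y => exists n, y = - u n)) as [M' [Hub Hlub]].
  { exists (- eta). intros y [n ->]. specialize (Hu_ge n). lra. }
  { exists (- u 0%nat). exists 0%nat. reflexivity. }
  set (c := - M').
  assert (Hc1 : forall n, c <= u n).
  { intros n. assert (- u n <= M') by (apply Hub; exists n; reflexivity). unfold c; lra. }
  assert (Hc2 : forall e, 0 < e -> exists N, u N < c + e).
  { intros e He'. apply NNPP; intros Hno.
    assert (M' <= M' - e); [|lra].
    apply Hlub. intros y [n ->].
    destruct (Rlt_or_le (u n) (c + e)) as [Hl|Hl]; [exfalso; apply Hno; eauto|]. unfold c in Hl; lra. }
  assert (Hmvt : forall n : nat, exists s, INR n + 1 <= s <= INR n + 2 /\ u (Datatypes.S n) - u n = Dt s).
  { intros n. destruct (Lt_mvt (INR n + 1) (INR n + 2)) as [s [Hs Hs2]].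
    - pose proof (HI n); lra.
    - intros x Hx. apply post_all. pose proof (HI n); lra.
    - exists s. split; auto. unfold u. rewrite S_INR.
      replace (INR n + 1 + 1) with (INR n + 2) by ring. rewrite Hs2. ring. }
  set (sf := fun n => proj1_sig (constructive_indefinite_description _ (Hmvt n))).
  assert (Hsf : forall n, INR n + 1 <= sf n <= INR n + 2 /\ u (Datatypes.S n) - u n = Dt (sf n)).
  { intros n. unfold sf. destruct (constructive_indefinite_description _ (Hmvt n)) as [s Hs]. exact Hs. }
  assert (Hsf0 : forall n, 0 <= sf n) by (intros n; destruct (Hsf n) as [[? ?] _]; pose proof (HI n); lra).
  assert (Hd0 : is_lim_seq (fun n => Dt (sf n)) 0).
  { apply is_lim_seq_Reals. intros e He'. destruct (Hc2 e He') as [N HN]. exists N.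
    intros n Hnn. unfold R_dist. rewrite Rminus_0_r. destruct (Hsf n) as [_ Heq'].
    rewrite <- Heq'. pose proof (Hu_anti n (Datatypes.S n) ltac:(lia)).
    pose proof (Hu_anti N n ltac:(lia)). pose proof (Hc1 (Datatypes.S n)).
    rewrite Rabs_left1 by lra. lra. }
  pose proof mlow_pos as Hm.
  destruct (bw_sub (fun n => S (sf n)) mlow ((sqrt Ss + sqrt (Lt 0))^2)) as [p1 [Hp1 [l1 [Hl1 L1]]]].
  { intros n. split; [apply (pos_all _ (Hsf0 n))|apply (up_all _ (Hsf0 n))]. }
  destruct (bw_sub (fun n => V (sf (p1 n))) mlow ((sqrt Vs + sqrt (Lt 0))^2)) as [p2 [Hp2 [l2 [Hl2 L2]]]].
  { intros n. split; [apply (pos_all _ (Hsf0 _))|apply (up_all _ (Hsf0 _))]. }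
  destruct (bw_sub (fun n => I1 (sf (p1 (p2 n)))) mlow ((sqrt I1s + sqrt (Lt 0))^2)) as [p3 [Hp3 [l3 [Hl3 L3]]]].
  { intros n. split; [apply (pos_all _ (Hsf0 _))|apply (up_all _ (Hsf0 _))]. }
  destruct (bw_sub (fun n => I2 (sf (p1 (p2 (p3 n))))) mlow ((sqrt I2s + sqrt (Lt 0))^2)) as [p4 [Hp4 [l4 [Hl4 L4]]]].
  { intros n. split; [apply (pos_all _ (Hsf0 _))|apply (up_all _ (Hsf0 _))]. }
  assert (Hq34 : forall n, (p3 (p4 n) < p3 (p4 (Datatypes.S n)))%nat) by (apply incr_comp; auto).
  assert (Hq234 : forall n, (p2 (p3 (p4 n)) < p2 (p3 (p4 (Datatypes.S n))))%nat)
    by (apply (incr_comp p2 (fun n => p3 (p4 n))); auto).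
  assert (Hq1234 : forall n, (p1 (p2 (p3 (p4 n))) < p1 (p2 (p3 (p4 (Datatypes.S n)))))%nat)
    by (apply (incr_comp p1 (fun n => p2 (p3 (p4 n)))); auto).
  set (psi := fun n => sf (p1 (p2 (p3 (p4 n))))).
  assert (M1 : is_lim_seq (fun n => S (psi n)) l1).
  { apply (is_lim_seq_subseq (fun n => S (sf (p1 n))) l1 (fun n => p2 (p3 (p4 n)))); auto.
    apply eventually_subseq; auto. }
  assert (M2 : is_lim_seq (fun n => V (psi n)) l2).
  { apply (is_lim_seq_subseq (fun n => V (sf (p1 (p2 n)))) l2 (fun n => p3 (p4 n))); auto.
    apply eventually_subseq; auto. }
  assert (M3 : is_lim_seq (fun n => I1 (psi n)) l3).
  { apply (is_lim_seq_subseq (fun n => I1 (sf (p1 (p2 (p3 n))))) l3 p4); auto.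
    apply eventually_subseq; auto. }
  assert (M4 : is_lim_seq (fun n => I2 (psi n)) l4) by exact L4.
  assert (Hpl : pos4 l1 l2 l3 l4) by (repeat split; lra).
  assert (MD : is_lim_seq (fun n => Dt (psi n)) 0).
  { apply (is_lim_seq_subseq (fun n => Dt (sf n)) 0 (fun n => p1 (p2 (p3 (p4 n))))); auto.
    apply eventually_subseq; auto. }
  assert (MD' : is_lim_seq (fun n => Dt (psi n)) (Df l1 l2 l3 l4)).
  { unfold Dt. apply Df_lim; auto. }
  assert (HD0 : Df l1 l2 l3 l4 = 0).
  { pose proof (is_lim_seq_unique _ _ MD) as U1. pose proof (is_lim_seq_unique _ _ MD') as U2.
    rewrite U1 in U2. injection U2. auto. }
  assert (ML : is_lim_seq (fun n => Lt (psi n)) (Lf l1 l2 l3 l4)).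
  { unfold Lt. apply Lf_lim; auto. }
  assert (HLl : eta <= Lf l1 l2 l3 l4).
  { pose proof (is_lim_seq_le (fun _ => eta) (fun n => Lt (psi n)) eta (Lf l1 l2 l3 l4)) as Hle.
    simpl in Hle. apply Hle; auto. intros n. apply Hge. unfold psi. auto. apply is_lim_seq_const. }
  assert (Hne : (l1, l2, l3, l4) <> (Ss, Vs, I1s, I2s)).
  { intros Heq'. injection Heq'. intros -> -> -> ->. rewrite Lf_E3 in HLl. lra. }
  destruct Hpl as [q1 [q2 [q3 q4]]].
  pose proof (Hneg l1 l2 l3 l4 q1 q2 q3 q4 Hne).
  pose proof (Df_leH l1 l2 l3 l4 ltac:(repeat split; auto)). lra.
Qed.


Lemma attract :
  filterlim S (Rbar_locally p_infty) (locally Ss) /\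
  filterlim V (Rbar_locally p_infty) (locally Vs) /\
  filterlim I1 (Rbar_locally p_infty) (locally I1s) /\
  filterlim I2 (Rbar_locally p_infty) (locally I2s).
Proof.
  assert (Gen : forall (x : R -> R) xs, 0 < xs -> (forall t, 0 <= t -> 0 < x t /\ hh (x t) xs <= Lt t) ->
    filterlim x (Rbar_locally p_infty) (locally xs)).
  { intros x xs Hxs Hx. apply filterlim_locally. intros eps.
    destruct (Lt_to0 (etaf xs eps) (etaf_pos xs eps (cond_pos eps) ltac:(lra))) as [T HT].
    exists (Rmax T 0). intros t Ht. apply ball_R.
    pose proof (Rmax_l T 0); pose proof (Rmax_r T 0).
    destruct (Hx t ltac:(lra)) as [Hp Hh]. specialize (HT t ltac:(lra)).
    apply hh_close; auto. apply cond_pos. lra. }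
  repeat split; apply Gen; auto; intros t Ht; pose proof (post_all t Ht) as Hp;
    destruct (Lf_bounds _ _ _ _ Hp) as [B1 [B2 [B3 B4]]]; destruct Hp as [q1 [q2 [q3 q4]]];
    unfold Lt; split; auto.
Qed.

End Sol.

Lemma stab : forall eps, 0 < eps -> exists delta, 0 < delta /\
     forall S V1 I1 I2 : R -> R,
       is_solution Lam mu r k gam1 gam2 v1 v2 F1 F2 S V1 I1 I2 ->
       0 < S 0 -> 0 < V1 0 -> 0 < I1 0 -> 0 < I2 0 ->
       dist4 (S 0) (V1 0) (I1 0) (I2 0) Ss Vs I1s I2s < delta ->
       forall t, 0 <= t -> dist4 (S t) (V1 t) (I1 t) (I2 t) Ss Vs I1s I2s < eps.
Proof.
  intros eps He.
  set (eta := Rmin (Rmin (etaf Ss (eps/2)) (etaf Vs (eps/2))) (Rmin (etaf I1s (eps/2)) (etaf I2s (eps/2)))).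
  assert (Heta : 0 < eta) by (unfold eta; repeat apply Rmin_glb_lt; apply etaf_pos; lra).
  destruct (min4_le (etaf Ss (eps/2)) (etaf Vs (eps/2)) (etaf I1s (eps/2)) (etaf I2s (eps/2))) as [e1 [e2 [e3 e4]]].
  fold eta in e1, e2, e3, e4.
  assert (Hdp : forall xs, 0 < xs -> 0 < deltaf xs eta).
  { intros xs Hxs. unfold deltaf. repeat apply Rmin_glb_lt; try lra.
    apply Rdiv_lt_0_compat; [apply Rmult_lt_0_compat|]; lra. }
  exists (Rmin (Rmin (deltaf Ss eta) (deltaf Vs eta)) (Rmin (deltaf I1s eta) (deltaf I2s eta))).
  split. { apply Rmin_glb_lt; apply Rmin_glb_lt; apply Hdp; auto. }
  intros S V I1 I2 Hs p1 p2 p3 p4 Hd t Ht.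
  destruct (min4_le (deltaf Ss eta) (deltaf Vs eta) (deltaf I1s eta) (deltaf I2s eta)) as [d1 [d2 [d3 d4]]].
  destruct (dist4_ge (S 0) (V 0) (I1 0) (I2 0) Ss Vs I1s I2s) as [a1 [a2 [a3 a4]]].
  assert (HL0 : Lt S V I1 I2 0 < eta).
  { unfold Lt, Lf.
    pose proof (hh_small (S 0) Ss eta p1 hSs Heta ltac:(lra)).
    pose proof (hh_small (V 0) Vs eta p2 hVs Heta ltac:(lra)).
    pose proof (hh_small (I1 0) I1s eta p3 hI1s Heta ltac:(lra)).
    pose proof (hh_small (I2 0) I2s eta p4 hI2s Heta ltac:(lra)). lra. }
  pose proof (Lt_anti S V I1 I2 Hs p1 p2 p3 p4 0 t ltac:(lra)) as HLt.
  pose proof (post_all S V I1 I2 Hs p1 p2 p3 p4 t Ht) as Hp.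
  destruct (Lf_bounds _ _ _ _ Hp) as [B1 [B2 [B3 B4]]]. destruct Hp as [q1 [q2 [q3 q4]]].
  unfold Lt in HLt, HL0.
  apply dist4_lt; auto; apply hh_close; auto; try lra.

Qed.

Lemma main_GAS : GAS Lam mu r k gam1 gam2 v1 v2 F1 F2 Ss Vs I1s I2s.
Proof.
  split.
  - apply stab.
  - intros S V I1 I2 Hs p1 p2 p3 p4. apply attract; auto.
Qed.

End Main.

Theorem mainTheorem16
  (Lam mu r k gam1 gam2 v1 v2 : R) (F1 F2 f1 f2 g1 g2 : R -> R -> R)
  (Ss Vs I1s I2s : R) :
  0 < Lam -> 0 < mu -> 0 < r -> 0 < k -> 0 < gam1 -> 0 < gam2 ->
  0 <= v1 -> 0 <= v2 ->
  incidence_hyp F1 f1 g1 -> incidence_hyp F2 f2 g2 ->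
  0 < Ss -> 0 < Vs -> 0 < I1s -> 0 < I2s ->
  is_equilibrium Lam mu r k gam1 gam2 v1 v2 F1 F2 Ss Vs I1s I2s ->
  (forall S V1 I1 I2 : R,
     0 < S -> 0 < V1 -> 0 < I1 -> 0 < I2 ->
     (S, V1, I1, I2) <> (Ss, Vs, I1s, I2s) ->
     F1 Ss I1s * (2 - Ss / S - S * g1 S I1 / (Ss * g1 Ss I1s))
     + F2 Ss I2s * (2 - Ss / S - S * g2 S I2 / (Ss * g2 Ss I2s))
     + r * Ss * (3 - Ss / S - V1 / Vs - S * Vs / (Ss * V1))
     + mu * Ss * (2 - Ss / S - S / Ss)
     + I1 * (Ss * g1 S I1 - (gam1 + v1 + mu))
     + I2 * (Ss * g2 S I2 + k * Vs - (gam2 + v2 + mu)) < 0) ->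
  GAS Lam mu r k gam1 gam2 v1 v2 F1 F2 Ss Vs I1s I2s.
Proof.
  intros. eapply main_GAS; eauto.
Qed.
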